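(* As formal series of linear operators on $\mathcal N_q^-$ (with $x^-_i(v)=\sum_m x^-_{i,m}v^{-m}$ acting by left multiplication), for all $1\le i,j,k,m\le N$: $$\Omega_{\psi_m}(u)x^-_i(v)=\delta_{i,m}\delta(v\gamma/u)+g_{i,m,q^{-1}}(v\gamma/u)\,x^-_i(v)\Omega_{\psi_m}(u),$$ $$\Omega_{\phi_m}(u)x^-_i(v)=\delta_{i,m}\delta(u\gamma/v)+g_{i,m}(u\gamma/v)\,x^-_i(v)\Omega_{\phi_m}(u),$$ $$(q^{(\alpha_j|\alpha_k)}u_1-u_2)\Omega_{\psi_j}(u_1)\Omega_{\psi_k}(u_2)=(u_1-q^{(\alpha_j|\alpha_k)}u_2)\Omega_{\psi_k}(u_2)\Omega_{\psi_j}(u_1),$$ $$(q^{(\alpha_j|\alpha_k)}u_1-u_2)\Omega_{\phi_j}(u_1)\Omega_{\phi_k}(u_2)=(u_1-q^{(\alpha_j|\alpha_k)}u_2)\Omega_{\phi_k}(u_2)\Omega_{\phi_j}(u_1),$$ $$(q^{(\alpha_j|\alpha_k)}\gamma^2u_1-u_2)\Omega_{\phi_j}(u_1)\Omega_{\psi_k}(u_2)=(\gamma^2u_1-q^{(\alpha_j|\alpha_k)}u_2)\Omega_{\psi_k}(u_2)\Omega_{\phi_j}(u_1).$$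
   Context: Let $\mathfrak g$ be a finite-dimensional complex simple Lie algebra of rank $N$ with simple roots $\alpha_1,\dots,\alpha_N$ and invariant form $(\cdot|\cdot)$; $U_q(\widehat{\mathfrak g})$ the untwisted quantum affine algebra over $\mathbb C(q^{1/2})$ in Drinfeld's realization with generators $x^\pm_{i,r}$, $h_{i,s}$, $K_i^{\pm1}$, $\gamma^{\pm1/2}$ (central), $D^{\pm1}$; the $x^-$ satisfy $x^-_{i,k+1}x^-_{j,l}-q^{-(\alpha_i|\alpha_j)}x^-_{j,l}x^-_{i,k+1}=q^{-(\alpha_i|\alpha_j)}x^-_{i,k}x^-_{j,l+1}-x^-_{j,l+1}x^-_{i,k}$. Let $\mathcal N_q^-$ be the subalgebra generated by $\gamma^{\pm1/2}$ and all $x^-_{i,l}$. Let $\delta(z)=\sum_{k\in\mathbb Z}z^k$; let $g_{ij}(t)$ be the Taylor series at $t=0$ of $(q^{(\alpha_i|\alpha_j)}t-1)/(t-q^{(\alpha_i|\alpha_j)})$ and $g_{ij,q^{-1}}(t)$ the same with $q$ replaced by $q^{-1}$. Put $x^-_i(v)=\sum_{m}x^-_{i,m}v^{-m}$. Operators $\Omega_{\psi_i}(l),\Omega_{\phi_i}(l):\mathcal N_q^-\to\mathcal N_q^-$ ($l\in\mathbb Z$, $1\le i\le N$), with generating series $\Omega_{\psi_i}(u)=\sum_l\Omega_{\psi_i}(l)u^{-l}$, $\Omega_{\phi_i}(u)=\sum_l\Omega_{\phi_i}(l)u^{-l}$, are defined as follows: they commute with multiplication by $\gamma^{\pm1/2}$,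 kill $1$, and for $\bar P=x^-_{j_1}(v_1)\cdots x^-_{j_k}(v_k)$ (a generating series whose coefficients are the monomials $x^-_{j_1,n_1}\cdots x^-_{j_k,n_k}$), with $\bar P_l$ the product with the $l$-th factor omitted, $\Omega_{\psi_i}(u)(\bar P)=\sum_{l=1}^k\delta_{i,j_l}\prod_{m=1}^{l-1}g_{i,j_m,q^{-1}}(v_m/v_l)\,\bar P_l\,\delta(u/v_l\gamma)$ and $\Omega_{\phi_i}(u)(\bar P)=\sum_{l=1}^k\delta_{i,j_l}\prod_{m=1}^{l-1}g_{i,j_m}(v_l/v_m)\,\bar P_l\,\delta(u\gamma/v_l)$. *)

(* Defs.v *)
From HB Require Import structures.
From mathcomp Require Import all_boot all_order all_algebra.
From mathcomp Require Import complex fraction Rstruct.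

Set Implicit Arguments.
Unset Strict Implicit.
Unset Printing Implicit Defensive.

Import Order.TTheory GRing.Theory Num.Theory.
Local Open Scope ring_scope.

(* The base field C(q^{1/2}): rational functions in one indeterminate        *)
(* q^{1/2} = 'X over the complex numbers C = R[i] (R = the real numbers).    *)
Notation Kq := {fraction {poly complex Rdefinitions.R}}.

Definition qhalf : Kq := tofrac ('X : {poly complex Rdefinitions.R}).
Definition qq : Kq := qhalf ^+ 2.

(* Root data: B i j = (alpha_i | alpha_j) for the simple roots alpha_1..alpha_N
   (indices 0..N-1 here) of a finite-dimensional complex simple Lie algebra,
   w.r.t. an invariant form normalised to take integer values.  This is the
   symmetrised Cartan matrix of an indecomposable Cartan matrix of finite type:
   symmetric, positive diagonal, Cartan integers a_ij = 2 B_ij / B_ii are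
   nonpositive integers off the diagonal, positive definite, indecomposable. *)
Definition fin_simple_form (N : nat) (B : 'I_N -> 'I_N -> int) : Prop :=
  [/\ (0 < N)%N,
      (forall i j, B i j = B j i),
      (forall i, 0 < B i i),
      (forall i j, i != j -> B i j <= 0 /\ (B i i %| 2 * B i j)%Z) &
      (forall x : 'I_N -> rat, (exists i, x i != 0) ->
          0 < \sum_i \sum_j x i * (B i j)%:~R * x j)
   /\ (forall S : {set 'I_N}, S != set0 -> S != setT ->
          exists i j, [/\ i \in S, j \notin S & B i j != 0])].

(* Taylor coefficients at t = 0 of  g_Q(t) = (Q t - 1) / (t - Q):
     g_Q(t) = sum_n gcoef Q n t^n,  gcoef Q 0 = Q^-1,
     gcoef Q n = Q^-(n+1) - Q^-(n-1)  for n >= 1.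
   g_{ij}         = g_{q^{(alpha_i|alpha_j)}},
   g_{ij,q^{-1}}  = g_{(q^{-1})^{(alpha_i|alpha_j)}}.                        *)
Definition gcoef (F : fieldType) (Q : F) (n : nat) : F :=
  if n is n'.+1 then Q ^- n'.+2 - Q ^- n' else Q^-1.


(* sanity check: (t - Q) * sum_n gcoef Q n t^n = Q t - 1 coefficientwise *)
Lemma gcoef_spec (F : fieldType) (Q : F) : Q != 0 ->
  [/\ - Q * gcoef Q 0 = -1,
      gcoef Q 0 - Q * gcoef Q 1 = Q &
      forall n, (1 < n)%N -> gcoef Q n.-1 - Q * gcoef Q n = 0].
Proof.
move=> Q0.
have hk k : Q * Q ^- k.+1 = Q ^- k by rewrite exprS invfM mulVKf.
rewrite /gcoef; split.
- by rewrite /= mulNr divff.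
- by rewrite /= mulrBr hk expr0 invr1 mulr1 opprB addrC subrK.
- case=> [|[|n]] //= _.
  by rewrite mulrBr !hk subrr.
Qed.

Definition g_ij N (B : 'I_N -> 'I_N -> int) (i j : 'I_N) : nat -> Kq :=
  gcoef (qq ^ B i j).
Definition g_ij_qinv N (B : 'I_N -> 'I_N -> int) (i j : 'I_N) : nat -> Kq :=
  gcoef (qq^-1 ^ B i j).

(* Integer powers of gamma^{1/2}, given gh = gamma^{1/2} and ghi = gamma^{-1/2}:
   gpow gh ghi z = gamma^{z/2}.  In particular gamma^l = gpow gh ghi (2 * l). *)
Definition gpow (A : ringType) (gh ghi : A) (z : int) : A :=
  match z with Posz n => gh ^+ n | Negz n => ghi ^+ n.+1 end.

Definition mono (A : ringType) N (x : 'I_N -> int -> A)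
  (s : seq ('I_N * int)) : A := \prod_(e <- s) x e.1 e.2.

(* Coefficient of u^{-l} v_1^{-n_1} ... v_k^{-n_k} in
     Omega_psi_i(u)(x_{j_1}(v_1)...x_{j_k}(v_k))
   = sum_t delta_{i,j_t} prod_{m<t} g_{i,j_m,q^{-1}}(v_m/v_t) Pbar_t delta(u/(v_t gamma)),
   i.e. the value of Omega_psi_i(l) on the monomial x_{j_1,n_1}...x_{j_k,n_k}:
     sum over positions t with j_t = i, and over (p_m)_{m<t} in N^t with
     sum_m p_m = l + n_t, of
       prod_{m<t} g_{i,j_m,q^{-1}}[p_m] * gamma^l *
       x_{j_1,n_1+p_1} ... x_{j_{t-1},n_{t-1}+p_{t-1}} x_{j_{t+1},n_{t+1}} ... *)
Definition psi_mono (A : algType Kq) N (B : 'I_N -> 'I_N -> int)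
  (gh ghi : A) (x : 'I_N -> int -> A) (i : 'I_N) (l : int)
  (s : seq ('I_N * int)) : A :=
  let d := (i, 0%Z) in
  \sum_(t < size s | (nth d s t).1 == i)
    (if 0 <= l + (nth d s t).2 then
       \sum_(p : {ffun 'I_t -> 'I_(absz (l + (nth d s t).2)%R).+1}
               | (\sum_m (p m : nat) == absz (l + (nth d s t).2)%R)%N)
          (\prod_(m < t) g_ij_qinv B i (nth d s m).1 (p m)) *:
          (gpow gh ghi (2 * l) *
           mono x ([seq ((nth d s m).1, (nth d s m).2 + (p m : nat)%:Z)
                   | m : 'I_t <- enum 'I_t] ++ drop t.+1 s))
     else 0).

(* Same for Omega_phi_i(u)(x_{j_1}(v_1)...x_{j_k}(v_k))
   = sum_t delta_{i,j_t} prod_{m<t} g_{i,j_m}(v_t/v_m) Pbar_t delta(u gamma/v_t):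
     sum over t with j_t = i, and over (p_m)_{m<t} with sum_m p_m = -(l + n_t), of
       prod_{m<t} g_{i,j_m}[p_m] * gamma^{-l} *
       x_{j_1,n_1-p_1} ... x_{j_{t-1},n_{t-1}-p_{t-1}} x_{j_{t+1},n_{t+1}} ...   *)
Definition phi_mono (A : algType Kq) N (B : 'I_N -> 'I_N -> int)
  (gh ghi : A) (x : 'I_N -> int -> A) (i : 'I_N) (l : int)
  (s : seq ('I_N * int)) : A :=
  let d := (i, 0%Z) in
  \sum_(t < size s | (nth d s t).1 == i)
    (if l + (nth d s t).2 <= 0 then
       \sum_(p : {ffun 'I_t -> 'I_(absz (l + (nth d s t).2)%R).+1}
               | (\sum_m (p m : nat) == absz (l + (nth d s t).2)%R)%N)
          (\prod_(m < t) g_ij B i (nth d s m).1 (p m)) *: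
          (gpow gh ghi (- (2 * l)) *
           mono x ([seq ((nth d s m).1, (nth d s m).2 - (p m : nat)%:Z)
                   | m : 'I_t <- enum 'I_t] ++ drop t.+1 s))
     else 0).

(* N_q^-: a C(q^{1/2})-algebra A containing gamma^{1/2} (gh, invertible with
   inverse ghi, central) and the x^-_{i,l}, generated (as a vector space, by
   monomials gamma^{z/2} x_{j_1,n_1}...x_{j_k,n_k}) by these elements, in which
   the quadratic x^- relation of U_q(\hat g) holds.                          *)
Definition Nq_minus N (B : 'I_N -> 'I_N -> int) (A : algType Kq)
  (gh ghi : A) (x : 'I_N -> int -> A) : Prop :=
  [/\ gh * ghi = 1, ghi * gh = 1,
      (forall a : A, gh * a = a * gh),
      (forall (i j : 'I_N) (k l : int),
         x i (k + 1) * x j l - qq ^ (- B i j) *: (x j l * x i (k + 1))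
         = qq ^ (- B i j) *: (x i k * x j (l + 1)) - x j (l + 1) * x i k) &
      (forall a : A, exists r : seq (Kq * int * seq ('I_N * int)),
         a = \sum_(e <- r) e.1.1 *: (gpow gh ghi e.1.2 * mono x e.2))].

Definition Omega_spec (A : algType Kq) N
  (F : 'I_N -> int -> seq ('I_N * int) -> A)
  (gh ghi : A) (x : 'I_N -> int -> A) (O : 'I_N -> int -> A -> A) : Prop :=
  [/\ (forall i l (c : Kq) (a b : A), O i l (c *: a + b) = c *: O i l a + O i l b),
      (forall i l (a : A), O i l (gh * a) = gh * O i l a),
      (forall i l (a : A), O i l (ghi * a) = ghi * O i l a),
      (forall i l, O i l 1 = 0) &
      (forall i l s, O i l (mono x s) = F i l s)].

(* Locally finite sums: "sum_{r >= 0} f r = s" where only finitely many f r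
   are nonzero.  Used for coefficients of products of formal series of
   operators, evaluated at a given element of N_q^-.                         *)
Definition fin_sum_to (V : nmodType) (f : nat -> V) (s : V) : Prop :=
  exists M : nat, (forall r, (M <= r)%N -> f r = 0) /\ s = \sum_(r < M) f r.

(* Main.v *)
Require Import Defs.
From HB Require Import structures.
From mathcomp Require Import all_boot all_order all_algebra.
From mathcomp Require Import complex fraction Rstruct.
From mathcomp Require Import zify ring.

Set Implicit Arguments.
Unset Strict Implicit.
Unset Printing Implicit Defensive.
Import Order.TTheory GRing.Theory Num.Theory.
Local Open Scope ring_scope.

Section Gam.
Variables (A : algType Kq) (gh ghi : A).
Hypotheses (h1 : gh * ghi = 1) (h2 : ghi * gh = 1) (hc : forall a : A, gh * a = a * gh).

Lemma ghi_c (a : A) : ghi * a = a * ghi.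
Proof.
by rewrite -[ghi * a]mulr1 -h1 mulrA -[ghi * a * gh]mulrA -hc !mulrA h2 mul1r.
Qed.

Lemma gpow_c z (a : A) : gpow gh ghi z * a = a * gpow gh ghi z.
Proof.
case: z => n /=.
  elim: n => [|n IH]; first by rewrite expr0 mul1r mulr1.
  by rewrite exprS -mulrA IH mulrA hc mulrA.
elim: n.+1 => [|k IH]; first by rewrite expr0 mul1r mulr1.
by rewrite exprS -mulrA IH mulrA ghi_c mulrA.
Qed.

Lemma gpowS z : gpow gh ghi (z + 1) = gh * gpow gh ghi z.
Proof.
case: z => [n|n].
  have -> : n%:Z + 1 = (n.+1)%:Z by lia.
  by rewrite /= exprS.
case: n => [|n].
  by rewrite /= expr1 h1.
have -> : Negz n.+1 + 1 = Negz n.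
  by rewrite !NegzE; lia.
by rewrite /= [ghi ^+ n.+2]exprS mulrA h1 mul1r.
Qed.

Lemma gpowP z : gpow gh ghi (z - 1) = ghi * gpow gh ghi z.
Proof.
case: z => [n|n].
  case: n => [|n].
    by rewrite /= expr1 mulr1.
  have -> : (n.+1)%:Z - 1 = n%:Z by lia.
  by rewrite /= exprS mulrA h2 mul1r.
have -> : Negz n - 1 = Negz n.+1 by rewrite !NegzE; lia.
by rewrite /= [ghi ^+ n.+2]exprS.
Qed.

Lemma gpow0 : gpow gh ghi 0 = 1.
Proof. by rewrite /= expr0. Qed.

Lemma gpowD z1 z2 : gpow gh ghi (z1 + z2) = gpow gh ghi z1 * gpow gh ghi z2.
Proof.
case: z2 => n.
  elim: n => [|n IH]; first by rewrite addr0 gpow0 mulr1.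
  have -> : z1 + (n.+1)%:Z = (z1 + n) + 1 by lia.
  have -> : (n.+1)%:Z = n%:Z + 1 by lia.
  by rewrite !gpowS IH mulrA hc mulrA.
rewrite NegzE.
elim: n => [|n IH].
  have -> : - (1%:Z) = 0 - 1 by [].
  by rewrite addrA addr0 gpowP gpowP gpow0 mulr1 ghi_c.
have -> : z1 - (n.+2)%:Z = (z1 - (n.+1)%:Z) - 1 by lia.
have -> : - (n.+2)%:Z = (- (n.+1)%:Z) - 1 by lia.
by rewrite !gpowP IH mulrA ghi_c mulrA.
Qed.

End Gam.
Fixpoint comps (t L : nat) : seq (seq nat) :=
  match t with
  | 0 => if L == 0%N then [:: [::]] else [::]
  | t'.+1 => [seq r :: c | r <- iota 0 L.+1, c <- comps t' (L - r)]
  end.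

Definition fcons t M (a : 'I_M.+1) (q : {ffun 'I_t -> 'I_M.+1}) : {ffun 'I_t.+1 -> 'I_M.+1} :=
  [ffun m => if unlift ord0 m is Some m' then q m' else a].

Definition funcons t M (p : {ffun 'I_t.+1 -> 'I_M.+1}) : 'I_M.+1 * {ffun 'I_t -> 'I_M.+1} :=
  (p ord0, [ffun m => p (lift ord0 m)]).

Lemma fcons_bij t M : bijective (fun j : 'I_M.+1 * {ffun 'I_t -> 'I_M.+1} => fcons j.1 j.2).
Proof.
exists (@funcons t M).
  case=> a q; rewrite /funcons /fcons /=; congr (_, _).
    by rewrite ffunE unlift_none.
  by apply/ffunP=> m; rewrite !ffunE liftK.
move=> p; rewrite /funcons /fcons /=; apply/ffunP=> m; rewrite !ffunE.
by case: unliftP => [m'|] -> ; rewrite ?ffunE.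
Qed.

Lemma ffun_comps (V : nmodType) t : forall L M (Q : seq nat -> V), (L <= M)%N ->
  \sum_(p : {ffun 'I_t -> 'I_M.+1} | (\sum_m (p m : nat) == L)%N)
     Q [seq (p m : nat) | m <- enum 'I_t]
  = \sum_(c <- comps t L) Q c.
Proof.
elim: t => [|t IH] L M Q LM.
  rewrite /= enum_ord0 /=.
  under eq_bigl => p do rewrite big_ord0.
  case: L LM => [|L] LM /=.
    rewrite big_cons big_nil addr0 sumr_const card_ffun card_ord.
    by rewrite (card_ord 0) expn0 mulr1n.
  by rewrite big_nil big_pred0.
rewrite [RHS](_ : _ = \sum_(r <- iota 0 L.+1) \sum_(c <- comps t (L - r)) Q (r :: c));
  last by rewrite -big_allpairs_dep.
rewrite (reindex _ (onW_bij _ (@fcons_bij t M))) /=.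
rewrite -(pair_big_dep xpredT (fun a (q : {ffun 'I_t -> 'I_M.+1}) =>
   (\sum_m (fcons a q m : nat) == L)%N)
   (fun a q => Q [seq (fcons a q m : nat) | m <- enum 'I_t.+1])) /=.
have E a q : (\sum_m (fcons a q m : nat) = a + \sum_m (q m : nat))%N.
  by rewrite big_ord_recl /fcons ffunE unlift_none; congr (_ + _)%N;
     apply: eq_bigr => m _; rewrite ffunE liftK.
have E2 a q : [seq (fcons a q m : nat) | m <- enum 'I_t.+1]
              = (a : nat) :: [seq (q m : nat) | m <- enum 'I_t].
  rewrite enum_ordSl /= /fcons ffunE unlift_none -map_comp; congr (_ :: _).
  by apply: eq_map => m /=; rewrite ffunE liftK.
under eq_bigr => a _ do under eq_bigl => q do rewrite E.
under eq_bigr => a _ do under eq_bigr => q _ do rewrite E2.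
transitivity (\sum_(a < M.+1) (if (a <= L)%N then
    \sum_(c <- comps t (L - a)) Q ((a : nat) :: c) else 0)).
  apply: eq_bigr => a _.
  case: leqP => aL.
    rewrite -(IH (L - a)%N M (fun c => Q ((a : nat) :: c))); last by lia.
    by apply: eq_bigl => q; apply/eqP/eqP; lia.
  by rewrite big_pred0 // => q; apply/eqP; lia.
rewrite -(big_mkord xpredT (fun a => if (a <= L)%N then
    \sum_(c <- comps t (L - a)) Q ((a : nat) :: c) else 0)).
rewrite (big_cat_nat (n := L.+1)) //.
rewrite [X in _ _ X = _]big1_seq; last first.
  by move=> i /andP[_]; rewrite mem_index_iota; case: leqP => //; lia.
rewrite Monoid.mulm1 /index_iota subn0; apply: eq_big_seq => r.

by rewrite mem_iota => /andP[_]; rewrite add0n ltnS => ->.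
Qed.

Definition condb (b : bool) (z : int) : bool := if b then z <= 0 else 0 <= z.
Definition gexp (b : bool) (l : int) : int := if b then - (2 * l) else 2 * l.
Definition shf (b : bool) (n : int) (r : nat) : int := if b then n - r%:Z else n + r%:Z.
Definition lr (b : bool) (l : int) (r : nat) : int := if b then l + r%:Z else l - r%:Z.

Section Gen.
Variables (A : algType Kq) (N : nat) (G : 'I_N -> 'I_N -> nat -> Kq) (b : bool)
  (gh ghi : A) (x : 'I_N -> int -> A).

Definition gen_mono (i : 'I_N) (l : int) (s : seq ('I_N * int)) : A :=
  let d := (i, 0%Z) in
  \sum_(t < size s | (nth d s t).1 == i)
    (if condb b (l + (nth d s t).2) then
       \sum_(p : {ffun 'I_t -> 'I_(absz (l + (nth d s t).2)%R).+1}
               | (\sum_m (p m : nat) == absz (l + (nth d s t).2)%R)%N)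
          (\prod_(m < t) G i (nth d s m).1 (p m)) *:
          (gpow gh ghi (gexp b l) *
           mono x ([seq ((nth d s m).1, shf b (nth d s m).2 (p m : nat))
                   | m : 'I_t <- enum 'I_t] ++ drop t.+1 s))
     else 0).

Definition Qf (i : 'I_N) (l : int) (s : seq ('I_N * int)) (t : nat) (c : seq nat) : A :=
  (\prod_(m < t) G i (nth (i, 0%Z) s m).1 (nth 0%N c m)) *:
  (gpow gh ghi (gexp b l) *
   mono x ([seq ((nth (i, 0%Z) s k).1, shf b (nth (i, 0%Z) s k).2 (nth 0%N c k))
           | k <- iota 0 t] ++ drop t.+1 s)).

Lemma gen_mono_comps i l s : gen_mono i l s =
  \sum_(t < size s)
    (if (nth (i, 0%Z) s t).1 == i then
      (if condb b (l + (nth (i, 0%Z) s t).2) then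
         \sum_(c <- comps t (absz (l + (nth (i, 0%Z) s t).2)%R)) Qf i l s t c
       else 0) else 0).
Proof.
rewrite /gen_mono big_mkcond /=; apply: eq_bigr => t _.
case: ifP => // _; case: ifP => // _.
rewrite -(@ffun_comps _ t _ _ (Qf i l s t) (leqnn _)); apply: eq_bigr => p _.
have Hn (m : 'I_t) : nth 0%N [seq (p m0 : nat) | m0 <- enum 'I_t] m = p m.
  by rewrite (nth_map m) ?size_enum_ord ?ltn_ord // nth_ord_enum.
rewrite /Qf; congr (_ *: (_ * mono x (_ ++ _))).
  by apply: eq_bigr => m _; rewrite Hn.
rewrite -val_enum_ord -map_comp; apply: eq_map => m /=.
by rewrite Hn.
Qed.

End Gen.

Lemma psi_gen (A : algType Kq) N (B : 'I_N -> 'I_N -> int) gh ghi (x : 'I_N -> int -> A) :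
  psi_mono B gh ghi x = gen_mono (g_ij_qinv B) false gh ghi x.
Proof. by []. Qed.
Lemma phi_gen (A : algType Kq) N (B : 'I_N -> 'I_N -> int) gh ghi (x : 'I_N -> int -> A) :
  phi_mono B gh ghi x = gen_mono (g_ij B) true gh ghi x.
Proof. by []. Qed.


Section Cons.
Variables (A : algType Kq) (N : nat) (G : 'I_N -> 'I_N -> nat -> Kq) (b : bool)
  (gh ghi : A) (x : 'I_N -> int -> A).
Hypotheses (h1 : gh * ghi = 1) (h2 : ghi * gh = 1) (hc : forall a : A, gh * a = a * gh).
Hypothesis Gsym : forall i j r, G i j r = G j i r.

Lemma gexp_lr l r : gexp b l = 2 * r%:Z + gexp b (lr b l r).
Proof. by rewrite /gexp /lr; case: b; lia. Qed.

Lemma Qf_cons m i n l s t r c :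
  Qf G b gh ghi x m l ((i, n) :: s) t.+1 (r :: c) =
  G i m r *: (gpow gh ghi (2 * r%:Z) * (x i (shf b n r) * Qf G b gh ghi x m (lr b l r) s t c)).
Proof.
rewrite /Qf (gexp_lr l r) gpowD // Gsym.
set g1 := gpow gh ghi (2 * r%:Z).
set g2 := gpow gh ghi (gexp b (lr b l r)).
have cg1 : forall a, g1 * a = a * g1 by move=> a; apply: (gpow_c h1 h2 hc).
have cg2 : forall a, g2 * a = a * g2 by move=> a; apply: (gpow_c h1 h2 hc).
rewrite big_ord_recl /=.
have -> : iota 1 t = [seq k.+1 | k <- iota 0 t] by rewrite -(iotaDl 1 0).
rewrite -map_comp /= /mono big_cons /=.
set P := \prod_(k < t) _.
set M := \prod_(e <- _) _.
rewrite -scalerA -!scalerAr; congr (_ *: (_ *: _)).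
by rewrite -!mulrA; congr (g1 * _); rewrite mulrA cg2 -mulrA.
Qed.

Lemma cond_facts l nt r :
  [/\ condb b (l + nt) -> (r <= absz (l + nt)%R)%N ->
        condb b (lr b l r + nt) /\ absz (lr b l r + nt)%R = (absz (l + nt)%R - r)%N,
      condb b (l + nt) -> (absz (l + nt)%R < r)%N -> ~~ condb b (lr b l r + nt) &
      ~~ condb b (l + nt) -> ~~ condb b (lr b l r + nt)].
Proof.
rewrite /condb /lr; case: b; split.
- move=> H1 H2; split; lia.
- lia.
- lia.
- move=> H1 H2; split; lia.
- lia.
- lia.
Qed.

Lemma gen_cons m i n l s K :
  (forall t : 'I_(size s), (absz (l + (nth (m, 0%Z) s t).2)%R).+1 <= K)%N ->
  gen_mono G b gh ghi x m l ((i, n) :: s)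
    - (if (i == m) && (n == - l) then gpow gh ghi (gexp b l) * mono x s else 0)
  = \sum_(r < K) G i m r *:
       (gpow gh ghi (2 * r%:Z) * (x i (shf b n r) * gen_mono G b gh ghi x m (lr b l r) s)).
Proof.
move=> HK.
rewrite gen_mono_comps big_ord_recl.
rewrite [X in X + _ - _](_ : _ = (if (i == m) && (n == - l)
    then gpow gh ghi (gexp b l) * mono x s else 0)); last first.
  rewrite /=; case: (i == m) => //=.
  case Hc: (condb b (l + n)); case: (eqVneq (absz (l + n)%R) 0%N) => H /=.
  - rewrite big_cons big_nil addr0 /Qf big_ord0 scale1r /=.
    by rewrite drop0; have -> : (n == - l) = true by lia.
  - by rewrite big_nil; have -> : n == - l = false by lia.
  - by exfalso; move: Hc H; rewrite /condb; case: b => /=; lia.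
  - by have -> : n == - l = false by lia.
rewrite addrC addKr.
under [RHS]eq_bigr => r _ do rewrite gen_mono_comps mulr_sumr mulr_sumr scaler_sumr.
rewrite exchange_big; apply: eq_bigr => t _.
rewrite lift0.
case: ifP => jm; last first.
  by rewrite big1 // => r _; rewrite mulr0 mulr0 scaler0.
have Kt : ((absz (l + (nth (m, 0%Z) s t).2)%R).+1 <= K)%N.
  exact: HK.
set nt := (nth (m, 0%Z) s t).2 in Kt *.
case: (ifP) => Hc; last first.
  rewrite big1 // => r _.
  have [_ _ H3] := cond_facts l nt r.
  by rewrite (negbTE (H3 (negbT Hc))) mulr0 mulr0 scaler0.
set L := absz (l + nt)%R in Kt *.
rewrite (_ : \sum_(c <- comps t.+1 L) Qf G b gh ghi x m l ((i, n) :: s) t.+1 c =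
   \sum_(r <- iota 0 L.+1) \sum_(c <- comps t (L - r))
      Qf G b gh ghi x m l ((i, n) :: s) t.+1 (r :: c)); last by rewrite -big_allpairs_dep.
rewrite -(big_mkord xpredT (fun r => G i m r *: (gpow gh ghi (2 * r%:Z) *
    (x i (shf b n r) * (if condb b (lr b l r + nt) then
       \sum_(c <- comps t (absz (lr b l r + nt)%R)) Qf G b gh ghi x m (lr b l r) s t c
     else 0))))).
rewrite [RHS](big_cat_nat (n := L.+1)) //.
rewrite [X in _ = _ _ X]big1_seq; last first.
  move=> r /andP[_]; rewrite mem_index_iota => /andP[Lr _].
  have [_ H2 _] := cond_facts l nt r.
  by rewrite (negbTE (H2 Hc Lr)) mulr0 mulr0 scaler0.
rewrite Monoid.mulm1 /index_iota subn0; apply: eq_big_seq => r.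
rewrite mem_iota add0n ltnS => /andP[_ rL].
have [H1 _ _] := cond_facts l nt r.
have [-> ->] := H1 Hc rL.
rewrite mulr_sumr mulr_sumr scaler_sumr; apply: eq_bigr => c _.
by rewrite Qf_cons.
Qed.

End Cons.


Definition ev (P : nat -> Prop) := exists K0, forall K, (K0 <= K)%N -> P K.

Lemma evI P Q : ev P -> ev Q -> ev (fun K => P K /\ Q K).
Proof.
move=> [K1 H1] [K2 H2]; exists (maxn K1 K2) => K HK; split.
  by apply: H1; apply: leq_trans HK; apply: leq_maxl.
by apply: H2; apply: leq_trans HK; apply: leq_maxr.
Qed.

Lemma ev_ge R : ev (fun K => (R <= K)%N).
Proof. by exists R. Qed.

Lemma ev_fin (P : nat -> nat -> Prop) R : (forall r, (r < R)%N -> ev (P r)) ->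
  ev (fun K => forall r, (r < R)%N -> P r K).
Proof.
elim: R => [|R IH] H; first by exists 0%N.
have [K1 H1] := IH (fun r Hr => H r (ltnW Hr)).
have [K2 H2] := H R (ltnSn R).
exists (maxn K1 K2) => K HK r; rewrite ltnS leq_eqVlt => /orP[/eqP ->|Hr].
  by apply: H2; apply: leq_trans HK; apply: leq_maxr.
by apply: H1 => //; apply: leq_trans HK; apply: leq_maxl.
Qed.

Lemma ev_mono (P Q : nat -> Prop) : (forall K, P K -> Q K) -> ev P -> ev Q.
Proof. by move=> H [K0 HK]; exists K0 => K /HK /H. Qed.

Lemma seq_bound (T : Type) (s : seq (T * int)) : exists M : nat,
  forall e, e \in map (fun e => e.2) s -> (absz e <= M)%N.
Proof.
elim: s => [|e s [M HM]]; first by exists 0%N.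
exists (maxn (absz e.2) M) => z; rewrite /= inE => /orP[/eqP ->|/HM H].
  by apply: leq_maxl.
by apply: leq_trans H (leq_maxr _ _).
Qed.

Section Op.
Variables (A : algType Kq) (N : nat) (gh ghi : A) (x : 'I_N -> int -> A).
Hypotheses (h1 : gh * ghi = 1) (h2 : ghi * gh = 1) (hc : forall a : A, gh * a = a * gh).
Hypothesis Hspan : forall a : A, exists r : seq (Kq * int * seq ('I_N * int)),
         a = \sum_(e <- r) e.1.1 *: (gpow gh ghi e.1.2 * mono x e.2).

Lemma span_ind (Pr : A -> Prop) : Pr 0 -> (forall c a b, Pr a -> Pr b -> Pr (c *: a + b)) ->
  (forall z s, Pr (gpow gh ghi z * mono x s)) -> forall a, Pr a.
Proof.
move=> H0 HD HM a; have [r ->] := Hspan a.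
elim: r => [|e r IH]; first by rewrite big_nil.
by rewrite big_cons; apply: HD.
Qed.

Lemma gpowc z (a : A) : gpow gh ghi z * a = a * gpow gh ghi z.
Proof. exact: gpow_c. Qed.

Lemma mono_cons i n s : mono x ((i, n) :: s) = x i n * mono x s.
Proof. by rewrite /mono big_cons. Qed.

Variable (F : 'I_N -> int -> seq ('I_N * int) -> A) (O : 'I_N -> int -> A -> A).
Hypothesis HO : Omega_spec F gh ghi x O.

Lemma OD i l a b : O i l (a + b) = O i l a + O i l b.
Proof. by have [H _ _ _ _] := HO; have := H i l 1 a b; rewrite !scale1r. Qed.
Lemma O0 i l : O i l 0 = 0.
Proof. by have := OD i l 0 0; rewrite addr0 => /eqP; rewrite -subr_eq subrr => /eqP <-. Qed.
Lemma OZ i l c a : O i l (c *: a) = c *: O i l a.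
Proof. by have [H _ _ _ _] := HO; have := H i l c a 0; rewrite !addr0 O0 addr0. Qed.
Lemma OB i l a b : O i l (a - b) = O i l a - O i l b.
Proof. by rewrite OD -scaleN1r OZ scaleN1r. Qed.
Lemma Osum i l (I : Type) (r : seq I) (f : I -> A) :
  O i l (\sum_(e <- r) f e) = \sum_(e <- r) O i l (f e).
Proof.
elim: r => [|e r IH]; first by rewrite !big_nil O0.
by rewrite !big_cons OD IH.
Qed.
Lemma Ogpow i l z a : O i l (gpow gh ghi z * a) = gpow gh ghi z * O i l a.
Proof.
have [_ Hg Hgi _ _] := HO.
case: z => n /=.
  elim: n => [|n IH]; first by rewrite !mul1r.
  by rewrite exprS -mulrA Hg IH mulrA.
elim: n.+1 => [|k IH]; first by rewrite !mul1r.
by rewrite exprS -mulrA Hgi IH mulrA.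
Qed.
Lemma Omono i l s : O i l (mono x s) = F i l s.
Proof. by have [_ _ _ H5 H6] := HO. Qed.
Lemma Okill1 i l : O i l 1 = 0.
Proof. by have [_ _ _ H5 H6] := HO. Qed.

End Op.


Section Gen2.
Variables (A : algType Kq) (N : nat) (gh ghi : A) (x : 'I_N -> int -> A).
Hypotheses (h1 : gh * ghi = 1) (h2 : ghi * gh = 1) (hc : forall a : A, gh * a = a * gh).
Hypothesis Hspan : forall a : A, exists r : seq (Kq * int * seq ('I_N * int)),
         a = \sum_(e <- r) e.1.1 *: (gpow gh ghi e.1.2 * mono x e.2).
Variables (G : 'I_N -> 'I_N -> nat -> Kq) (b : bool) (O : 'I_N -> int -> A -> A).
Hypothesis Gsym : forall i j r, G i j r = G j i r.
Hypothesis HO : Omega_spec (gen_mono G b gh ghi x) gh ghi x O.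

Definition dl (b' : bool) (m i : 'I_N) (l n : int) (P : A) : A :=
  if (i == m) && (n == - l) then gpow gh ghi (gexp b' l) * P else 0.

Definition esum K m i l n P :=
  \sum_(r < K) G i m r *: (gpow gh ghi (2 * r%:Z) * (x i (shf b n r) * O m (lr b l r) P)).

Let gc := gpow_c h1 h2 hc.

Lemma dl_lin b' m i l n c P Q : dl b' m i l n (c *: P + Q) = c *: dl b' m i l n P + dl b' m i l n Q.
Proof.
by rewrite /dl; case: ifP => _; rewrite ?scaler0 ?addr0 // mulrDr scalerAr.
Qed.

Lemma dl_gpow b' m i l n z P : dl b' m i l n (gpow gh ghi z * P) = gpow gh ghi z * dl b' m i l n P.
Proof.
by rewrite /dl; case: ifP => _; rewrite ?mulr0 // !mulrA gc.
Qed.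

Lemma dl0 b' m i l n : dl b' m i l n 0 = 0.
Proof. by rewrite /dl; case: ifP => _; rewrite ?mulr0. Qed.

Lemma esum_lin K m i l n c P Q :
  esum K m i l n (c *: P + Q) = c *: esum K m i l n P + esum K m i l n Q.
Proof.
rewrite /esum scaler_sumr -big_split; apply: eq_bigr => r _ /=.
rewrite (OD HO) (OZ HO) mulrDr mulrDr scalerDr; congr (_ + _).
by rewrite -!scalerAr !scalerA mulrC.
Qed.

Lemma esum0 K m i l n : esum K m i l n 0 = 0.
Proof. by rewrite /esum big1 // => r _; rewrite (O0 HO) !mulr0 scaler0. Qed.

Lemma esum_gpow K m i l n z P :
  esum K m i l n (gpow gh ghi z * P) = gpow gh ghi z * esum K m i l n P.
Proof.
rewrite /esum mulr_sumr; apply: eq_bigr => r _.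
rewrite (Ogpow HO) -scalerAr; congr (_ *: _).
by rewrite !mulrA -(gc z (gpow gh ghi (2 * r%:Z) * x i (shf b n r))) !mulrA.
Qed.

Lemma snd_bound (s : seq ('I_N * int)) M d (t : 'I_(size s)) :
  (forall e, e \in map (fun e => e.2) s -> (absz e <= M)%N) ->
  (absz (nth d s t).2 <= M)%N.
Proof.
move=> H; apply: H.
have -> : (nth d s t).2 = nth d.2 (map (fun e => e.2) s) t by rewrite (nth_map d).
by apply: mem_nth; rewrite size_map.
Qed.

Lemma Exp m i l n P : ev (fun K => O m l (x i n * P) = dl b m i l n P + esum K m i l n P).
Proof.
move: m i l n; pattern P; apply: (span_ind Hspan).
- move=> m i l n; exists 0%N => K _.
  by rewrite mulr0 (O0 HO) dl0 esum0 addr0.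
- move=> c a a' Ha Ha' m i l n.
  apply: ev_mono (evI (Ha m i l n) (Ha' m i l n)) => K [E1 E2].
  rewrite mulrDr -scalerAr (OD HO) (OZ HO) E1 E2 dl_lin esum_lin.
  by rewrite scalerDr addrACA.
- move=> z s m i l n.
  have [M HM] := seq_bound s.
  exists (absz l + M).+1 => K HK.
  have HK' : forall t : 'I_(size s),
      ((absz (l + (nth (m, 0%Z) s t).2)%R).+1 <= K)%N.
    move=> t; have := snd_bound (m, 0%Z) t HM; lia.
  have := gen_cons b x h1 h2 hc Gsym i n HK'.
  rewrite -/(dl b m i l n (mono x s)) => E.
  rewrite dl_gpow esum_gpow mulrA -gc -mulrA -mono_cons (Ogpow HO) (Omono HO).
  rewrite -mulrDr; congr (_ * _).
  rewrite -(subrK (dl b m i l n (mono x s)) (gen_mono _ _ _ _ _ _ _ _)) E addrC.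
  congr (_ + _); apply: eq_bigr => r _.
  by rewrite (Omono HO).
Qed.

Definition Van_prop (P : A) := forall l, ev (fun K => forall m r, (K <= r)%N -> O m (lr b l r) P = 0).

Lemma Van P : Van_prop P.
Proof.
pattern P; apply: (span_ind Hspan).
- by move=> l; exists 0%N => K _ m r _; rewrite (O0 HO).
- move=> c a a' Ha Ha' l.
  apply: ev_mono (evI (Ha l) (Ha' l)) => K [E1 E2] m r Hr.
  by rewrite (OD HO) (OZ HO) E1 // E2 // scaler0 addr0.
- move=> z s l.
  have [M HM] := seq_bound s.
  exists (absz l + M).+1 => K HK m r Hr.
  rewrite (Ogpow HO) (Omono HO) /gen_mono big1 ?mulr0 // => t _.
  have := snd_bound (m, 0%Z) t HM.
  rewrite /condb /lr; case: b => H; rewrite ifN //; lia.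
Qed.

End Gen2.

Lemma fin_from_ev (V : zmodType) (f : nat -> V) (s d : V) :
  ev (fun K => s = d + \sum_(r < K) f r) -> fin_sum_to f (s - d).
Proof.
move=> [K0 H]; exists K0; split.
  move=> r Hr; have := H r.+1 (leq_trans Hr (leqnSn r)).
  rewrite big_ord_recr /= (H r Hr) addrA => /eqP.
  by rewrite -subr_eq0 opprD addrA subrr add0r oppr_eq0 => /eqP.
by rewrite (H K0 (leqnn K0)) addrC addKr.
Qed.


Section TwoStep.
Variables (A : algType Kq) (N : nat) (gh ghi : A) (x : 'I_N -> int -> A).
Hypotheses (h1 : gh * ghi = 1) (h2 : ghi * gh = 1) (hc : forall a : A, gh * a = a * gh).
Hypothesis Hspan : forall a : A, exists r : seq (Kq * int * seq ('I_N * int)),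
         a = \sum_(e <- r) e.1.1 *: (gpow gh ghi e.1.2 * mono x e.2).
Variables (Ga Gb : 'I_N -> 'I_N -> nat -> Kq) (ba bb : bool) (Oa Ob : 'I_N -> int -> A -> A).
Hypotheses (Gsyma : forall i j r, Ga i j r = Ga j i r) (Gsymb : forall i j r, Gb i j r = Gb j i r).
Hypothesis HOa : Omega_spec (gen_mono Ga ba gh ghi x) gh ghi x Oa.
Hypothesis HOb : Omega_spec (gen_mono Gb bb gh ghi x) gh ghi x Ob.

Let gc := gpow_c h1 h2 hc.

Definition DS K (i ja kb : 'I_N) (n : int) (f : nat -> nat -> A) : A :=
  \sum_(r < K) \sum_(s < K) (Gb i kb r * Ga i ja s) *:
     (gpow gh ghi (2 * r%:Z) * (gpow gh ghi (2 * s%:Z) *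
        (x i (shf ba (shf bb n r) s) * f r s))).

Lemma Odl (O : 'I_N -> int -> A -> A) F (HO : Omega_spec F gh ghi x O) b' (ja m i : 'I_N) la l n P :
  O ja la (dl gh ghi b' m i l n P) = dl gh ghi b' m i l n (O ja la P).
Proof.
rewrite /dl; case: ifP => _; first by rewrite (Ogpow HO).
exact: (O0 HO).
Qed.

Lemma TS ja kb i n la lb P : ev (fun K =>
  Oa ja la (Ob kb lb (x i n * P)) =
    dl gh ghi bb kb i lb n (Oa ja la P)
    + \sum_(r < K) Gb i kb r *: (gpow gh ghi (2 * r%:Z) *
          dl gh ghi ba ja i la (shf bb n r) (Ob kb (lr bb lb r) P))
    + DS K i ja kb n (fun r s => Oa ja (lr ba la s) (Ob kb (lr bb lb r) P))).
Proof.
have [R1 HR1] := Van Hspan HOb P lb.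
have Ein : forall r, (r < R1)%N -> ev (fun K =>
    Oa ja la (x i (shf bb n r) * Ob kb (lr bb lb r) P) =
    dl gh ghi ba ja i la (shf bb n r) (Ob kb (lr bb lb r) P) +
    esum gh ghi x Ga ba Oa K ja i la (shf bb n r) (Ob kb (lr bb lb r) P)).
  by move=> r _; apply: (Exp h1 h2 hc Hspan Gsyma HOa).
have := evI (evI (Exp h1 h2 hc Hspan Gsymb HOb kb i lb n P) (ev_fin Ein)) (ev_ge R1).
apply: ev_mono => K [[Eout Ei] KR].
rewrite Eout (OD HOa) (Odl HOa) -addrA; congr (_ + _).
rewrite /esum (Osum HOa) /DS -big_split; apply: eq_bigr => r _.
rewrite (OZ HOa) (Ogpow HOa).
have -> : Oa ja la (x i (shf bb n r) * Ob kb (lr bb lb r) P) =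
    dl gh ghi ba ja i la (shf bb n r) (Ob kb (lr bb lb r) P) +
    esum gh ghi x Ga ba Oa K ja i la (shf bb n r) (Ob kb (lr bb lb r) P).
  case: (ltnP r R1) => Hr; first exact: Ei.
  rewrite (HR1 R1 (leqnn _) kb r Hr).
  by rewrite mulr0 (O0 HOa) dl0 (esum0 HOa) addr0.
rewrite mulrDr scalerDr; congr (_ + _).
rewrite /esum mulr_sumr scaler_sumr; apply: eq_bigr => s _.
by rewrite -scalerAr scalerA.
Qed.

End TwoStep.


Lemma shf_comm b1 b2 n r s : shf b1 (shf b2 n r) s = shf b2 (shf b1 n s) r.
Proof. by rewrite /shf; case: b1; case: b2; lia. Qed.

Lemma lrS b l s : lr b (l + 1) s = lr b l s + 1.
Proof. by rewrite /lr; case: b; lia. Qed.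

Lemma split3 (V : zmodType) (a1 b1 c1 a2 b2 c2 : V) :
  (a1 + b1 + c1) - (a2 + b2 + c2) = (a1 - a2) + (b1 - b2) + (c1 - c2).
Proof.
by rewrite !opprD addrACA [X in X + _]addrACA.
Qed.

Section Comm.
Variables (A : algType Kq) (N : nat) (gh ghi : A) (x : 'I_N -> int -> A).
Hypotheses (h1 : gh * ghi = 1) (h2 : ghi * gh = 1) (hc : forall a : A, gh * a = a * gh).
Hypothesis Hspan : forall a : A, exists r : seq (Kq * int * seq ('I_N * int)),
         a = \sum_(e <- r) e.1.1 *: (gpow gh ghi e.1.2 * mono x e.2).
Variables (G1 G2 : 'I_N -> 'I_N -> nat -> Kq) (b1 b2 : bool) (O1 O2 : 'I_N -> int -> A -> A).
Hypotheses (Gsym1 : forall i j r, G1 i j r = G1 j i r) (Gsym2 : forall i j r, G2 i j r = G2 j i r).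
Hypothesis HO1 : Omega_spec (gen_mono G1 b1 gh ghi x) gh ghi x O1.
Hypothesis HO2 : Omega_spec (gen_mono G2 b2 gh ghi x) gh ghi x O2.
Variables (j k : 'I_N) (al : Kq) (wz : int).
Let gw := gpow gh ghi wz.
Let gc := gpow_c h1 h2 hc.

Hypothesis Hkp : forall (u : int -> A) (i : 'I_N) n l1 l2, ev (fun K =>
  al *: (gw * dl gh ghi b2 k i l2 n (u (l1 + 1))) - dl gh ghi b2 k i (l2 + 1) n (u l1)
  = gw * (\sum_(s < K) G1 i j s *: (gpow gh ghi (2 * s%:Z) *
             dl gh ghi b2 k i l2 (shf b1 n s) (u (lr b1 (l1 + 1) s))))
    - al *: \sum_(s < K) G1 i j s *: (gpow gh ghi (2 * s%:Z) *
             dl gh ghi b2 k i (l2 + 1) (shf b1 n s) (u (lr b1 l1 s)))).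

Hypothesis Hjp : forall (v : int -> A) (i : 'I_N) n l1 l2, ev (fun K =>
  al *: (gw * \sum_(r < K) G2 i k r *: (gpow gh ghi (2 * r%:Z) *
             dl gh ghi b1 j i (l1 + 1) (shf b2 n r) (v (lr b2 l2 r))))
  - \sum_(r < K) G2 i k r *: (gpow gh ghi (2 * r%:Z) *
             dl gh ghi b1 j i l1 (shf b2 n r) (v (lr b2 (l2 + 1) r)))
  = gw * dl gh ghi b1 j i (l1 + 1) n (v l2) - al *: dl gh ghi b1 j i l1 n (v (l2 + 1))).

Definition Lh P l1 l2 := al *: (gw * O1 j (l1 + 1) (O2 k l2 P)) - O1 j l1 (O2 k (l2 + 1) P).
Definition Rh P l1 l2 := gw * O2 k l2 (O1 j (l1 + 1) P) - al *: O2 k (l2 + 1) (O1 j l1 P).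

Lemma DS_swap K i n f :
  DS gh ghi x G2 G1 b2 b1 K i k j n f = DS gh ghi x G1 G2 b1 b2 K i j k n (fun r s => f s r).
Proof.
rewrite /DS exchange_big; apply: eq_bigr => r _; apply: eq_bigr => s _.
rewrite mulrC shf_comm; congr (_ *: _).
by rewrite !mulrA (gc (2 * s%:Z) (gpow gh ghi (2 * r%:Z))).
Qed.

Definition DS12 K i n f := DS gh ghi x G1 G2 b1 b2 K i j k n f.

Lemma DS_comb K i n f1 f2 f3 f4 :
  al *: (gw * DS12 K i n f1) - DS12 K i n f2 - (gw * DS12 K i n f3 - al *: DS12 K i n f4)
  = DS12 K i n (fun r s => al *: (gw * f1 r s) - f2 r s - (gw * f3 r s - al *: f4 r s)).
Proof.
rewrite /DS12 /DS !mulr_sumr !scaler_sumr -!sumrB; apply: eq_bigr => r _.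
rewrite !mulr_sumr !scaler_sumr -!sumrB; apply: eq_bigr => s _.
set c := (G2 i k r * G1 i j s).
set g1 := gpow gh ghi (2 * r%:Z).
set g2 := gpow gh ghi (2 * s%:Z).
set X := x i (shf b1 (shf b2 n r) s).
have E (y : A) : gw * (c *: (g1 * (g2 * (X * y)))) = c *: (g1 * (g2 * (X * (gw * y)))).
  rewrite -scalerAr; congr (_ *: _).
  by rewrite !mulrA -(gc wz (g1 * g2 * X)) !mulrA.
rewrite !E !scalerA mulrC -!scalerA -!scalerBr; congr (_ *: _).
congr (_ *: _).
by rewrite !mulrBr !scalerAr.
Qed.

Lemma Lh_lin c a b l1 l2 : Lh (c *: a + b) l1 l2 = c *: Lh a l1 l2 + Lh b l1 l2.
Proof.
rewrite /Lh !(OD HO2) !(OZ HO2) !(OD HO1) !(OZ HO1).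
rewrite mulrDr -scalerAr scalerDr (scalerA al c) mulrC -scalerA scalerBr.
by rewrite opprD addrACA.
Qed.

Lemma Rh_lin c a b l1 l2 : Rh (c *: a + b) l1 l2 = c *: Rh a l1 l2 + Rh b l1 l2.
Proof.
rewrite /Rh !(OD HO1) !(OZ HO1) !(OD HO2) !(OZ HO2).
rewrite mulrDr -scalerAr scalerDr (scalerA al c) mulrC -scalerA scalerBr.
by rewrite opprD addrACA.
Qed.

Lemma comm_mono s : forall z l1 l2, Lh (gpow gh ghi z * mono x s) l1 l2 = Rh (gpow gh ghi z * mono x s) l1 l2.
Proof.
elim: s => [|[i n] s IH] z l1 l2.
  have Z (O : 'I_N -> int -> A -> A) F (HO : Omega_spec F gh ghi x O) m l :
      O m l (gpow gh ghi z * mono x [::]) = 0.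
    by rewrite /mono big_nil (Ogpow HO) (Okill1 HO) mulr0.
  by rewrite /Lh /Rh !(Z _ _ HO1) !(Z _ _ HO2) !(O0 HO1) !(O0 HO2) !mulr0 !scaler0 !subrr.
set P' := gpow gh ghi z * mono x s.
have -> : gpow gh ghi z * mono x ((i, n) :: s) = x i n * P'.
  by rewrite mono_cons mulrA (gc z (x i n)) -mulrA.
have := evI (evI (evI (TS h1 h2 hc Hspan Gsym1 Gsym2 HO1 HO2 j k i n (l1 + 1) l2 P')
                      (TS h1 h2 hc Hspan Gsym1 Gsym2 HO1 HO2 j k i n l1 (l2 + 1) P'))
                 (evI (TS h1 h2 hc Hspan Gsym2 Gsym1 HO2 HO1 k j i n l2 (l1 + 1) P')
                      (TS h1 h2 hc Hspan Gsym2 Gsym1 HO2 HO1 k j i n (l2 + 1) l1 P')))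
            (evI (Hkp (fun l => O1 j l P') i n l1 l2) (Hjp (fun l => O2 k l P') i n l1 l2)).
move=> [K0 /(_ K0 (leqnn K0)) [[[E1 E2] [E3 E4]] [Ek Ej]]].
cbv beta in Ek; cbv beta in Ej.
rewrite /Lh /Rh E1 E2 E3 E4 !mulrDr !scalerDr !split3 Ek Ej !DS_swap.
rewrite [X in X + _ = _]addrC; congr (_ + _).
apply/eqP; rewrite -subr_eq0; apply/eqP.
rewrite -/(DS12 _ _ _ _) -/(DS12 _ _ _ _) -/(DS12 _ _ _ _) -/(DS12 _ _ _ _).
rewrite DS_comb.
rewrite /DS12 /DS big1 // => r _; rewrite big1 // => s0 _.
have := IH z (lr b1 l1 s0) (lr b2 l2 r); rewrite /Lh /Rh !lrS => ->.
by rewrite subrr !mulr0 scaler0.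
Qed.

Lemma comm P l1 l2 : Lh P l1 l2 = Rh P l1 l2.
Proof.
move: l1 l2; pattern P; apply: (span_ind Hspan).
- by move=> l1 l2; rewrite /Lh /Rh ?(O0 HO2) ?(O0 HO1) ?(O0 HO2) !mulr0 !scaler0 !subrr.
- by move=> c a b Ha Hb l1 l2; rewrite Lh_lin Rh_lin Ha Hb.
- by move=> z s l1 l2; apply: comm_mono.
Qed.

End Comm.


Definition pk (b : bool) (n c : int) : int := if b then n - c else c - n.

Lemma sum_pick (V : zmodType) K (b : bool) (n c : int) (f : nat -> V) :
  \sum_(s < K) (if shf b n s == c then f s else 0) =
  if (0 <= pk b n c) && (absz (pk b n c) < K)%N then f (absz (pk b n c)) else 0.
Proof.
case: ifP => H.
  have Hlt : (absz (pk b n c) < K)%N by case/andP: H.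
  rewrite (bigD1 (Ordinal Hlt)) //= ifT; last by move: H; clear Hlt; rewrite /shf /pk; case: b; lia.
  rewrite big1 ?addr0 // => s Hs; rewrite ifN //.
  move: H Hs; rewrite /shf /pk -val_eqE /=; clear Hlt; case: b; lia.
rewrite big1 // => s _; rewrite ifN //.
have := ltn_ord s; move: H; rewrite /shf /pk; case: b; lia.
Qed.

Section Delta.
Variables (A : algType Kq) (N : nat) (gh ghi : A).
Hypotheses (h1 : gh * ghi = 1) (h2 : ghi * gh = 1) (hc : forall a : A, gh * a = a * gh).
Let gc := gpow_c h1 h2 hc.

Lemma gpow2 a b c (y : A) : a + b = c -> gpow gh ghi a * (gpow gh ghi b * y) = gpow gh ghi c * y.
Proof. by move=> <-; rewrite mulrA -gpowD. Qed.

Lemma if_pull (c : Kq) (g : A) (C : bool) (y : A) :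
  c *: (g * (if C then y else 0)) = if C then c *: (g * y) else 0.
Proof. by case: C; rewrite ?mulr0 ?scaler0. Qed.

Lemma dl_ne b (m i : 'I_N) l n P : i != m -> dl gh ghi b m i l n P = 0.
Proof. by rewrite /dl => /negbTE ->. Qed.

Lemma dl_eq b (m : 'I_N) l n P : dl gh ghi b m m l n P = if n == - l then gpow gh ghi (gexp b l) * P else 0.
Proof. by rewrite /dl eqxx. Qed.

Definition Kpart (G1 : 'I_N -> 'I_N -> nat -> Kq) b1 b2 (j k : 'I_N) (al : Kq) wz :=
 forall (u : int -> A) (i : 'I_N) n l1 l2, ev (fun K =>
  al *: (gpow gh ghi wz * dl gh ghi b2 k i l2 n (u (l1 + 1))) - dl gh ghi b2 k i (l2 + 1) n (u l1)
  = gpow gh ghi wz * (\sum_(s < K) G1 i j s *: (gpow gh ghi (2 * s%:Z) *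
             dl gh ghi b2 k i l2 (shf b1 n s) (u (lr b1 (l1 + 1) s))))
    - al *: \sum_(s < K) G1 i j s *: (gpow gh ghi (2 * s%:Z) *
             dl gh ghi b2 k i (l2 + 1) (shf b1 n s) (u (lr b1 l1 s)))).

Definition Jpart (G2 : 'I_N -> 'I_N -> nat -> Kq) b1 b2 (j k : 'I_N) (al : Kq) wz :=
 forall (v : int -> A) (i : 'I_N) n l1 l2, ev (fun K =>
  al *: (gpow gh ghi wz * \sum_(r < K) G2 i k r *: (gpow gh ghi (2 * r%:Z) *
             dl gh ghi b1 j i (l1 + 1) (shf b2 n r) (v (lr b2 l2 r))))
  - \sum_(r < K) G2 i k r *: (gpow gh ghi (2 * r%:Z) *
             dl gh ghi b1 j i l1 (shf b2 n r) (v (lr b2 (l2 + 1) r)))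
  = gpow gh ghi wz * dl gh ghi b1 j i (l1 + 1) n (v l2) - al *: dl gh ghi b1 j i l1 n (v (l2 + 1))).

Definition psi_facts (c : nat -> Kq) (al : Kq) :=
  [/\ c 0%N = al, c 1%N - al * c 0%N = -1 & forall d, c d.+2 = al * c d.+1].
Definition phi_facts (e : nat -> Kq) (al : Kq) :=
  [/\ al * e 0%N = 1, e 0%N - al * e 1%N = al & forall d, e d.+1 = al * e d.+2].

Lemma unif (u : int -> A) (E0 W0 : int) : exists Y : A,
  forall E W, E = E0 -> W = W0 -> gpow gh ghi E * u W = Y.
Proof. by exists (gpow gh ghi E0 * u W0) => E W -> ->. Qed.

Ltac unifY u E0 W0 :=
  let Y := fresh "Y" in
  let EY := fresh "EY" in
  have [Y EY] := unif u E0 W0;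
  rewrite ?EY; try lia.

Ltac dec := repeat match goal with
  |- context [if ?C then _ else _] =>
     first [ rewrite (_ : C = true); last by lia
           | rewrite (_ : C = false); last by lia ] end.

Lemma kFF (G1 : 'I_N -> 'I_N -> nat -> Kq) (j k : 'I_N) al :
  psi_facts (G1 k j) al -> Kpart G1 false false j k al 0.
Proof.
move=> [f0 f1 f2] u i n l1 l2; exists (absz n + absz l2 + 3)%N => K HK.
case: (eqVneq i k) => [->|ik]; last first.
  rewrite !dl_ne //.
  under eq_bigr => s _ do rewrite dl_ne //.
  under [X in _ = _ - _ *: X]eq_bigr => s _ do rewrite dl_ne //.
  by rewrite !big1 ?mulr0 ?scaler0 ?subrr // => s _; rewrite mulr0 scaler0.
rewrite !dl_eq.
under eq_bigr => s _ do rewrite dl_eq if_pull.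
under [X in _ = _ - _ *: X]eq_bigr => s _ do rewrite dl_eq if_pull.
rewrite (sum_pick K false n (- l2) (fun s : nat => G1 k j s *: (gpow gh ghi (2 * s%:Z) *
        (gpow gh ghi (gexp false l2) * u (lr false (l1 + 1) s))))).
rewrite (sum_pick K false n (- (l2 + 1)) (fun s : nat => G1 k j s *: (gpow gh ghi (2 * s%:Z) *
        (gpow gh ghi (gexp false (l2 + 1)) * u (lr false l1 s))))).
rewrite gpow0 !mul1r /gexp /lr /pk.
have [d En] : exists d, n = - l2 - d by exists (- l2 - n); lia.
case: d En => [[|[|m]]|m] En; dec.
- rewrite (_ : absz (- l2 - n) = 0%N); last by lia.
  rewrite !mulrA -!(gpowD h1 h2 hc).
  unifY u (2 * l2) (l1 + 1).
  by rewrite f0 subr0 scaler0 subr0.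
- rewrite (_ : absz (- l2 - n) = 1%N); last by lia.
  rewrite (_ : absz (- (l2 + 1) - n) = 0%N); last by lia.
  rewrite !mulrA -!(gpowD h1 h2 hc).
  unifY u (2 * l2 + 2) l1.
  by rewrite scaler0 sub0r scalerA -scalerBl f1 scaleN1r.
- rewrite (_ : absz (- l2 - n) = m.+2); last by lia.
  rewrite (_ : absz (- (l2 + 1) - n) = m.+1); last by lia.
  rewrite !mulrA -!(gpowD h1 h2 hc).
  unifY u (2 * l2 + 2 * m.+2%:Z) (l1 - m.+1%:Z).
  by rewrite scaler0 subrr scalerA -scalerBl f2 subrr scale0r.
- by rewrite ?mulr0 ?scaler0 ?subrr.
Qed.

Lemma kTT (G1 : 'I_N -> 'I_N -> nat -> Kq) (j k : 'I_N) al :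
  phi_facts (G1 k j) al -> Kpart G1 true true j k al 0.
Proof.
move=> [f0 f1 f2] u i n l1 l2; exists (absz n + absz l2 + 3)%N => K HK.
case: (eqVneq i k) => [->|ik]; last first.
  rewrite !dl_ne //.
  under eq_bigr => s _ do rewrite dl_ne //.
  under [X in _ = _ - _ *: X]eq_bigr => s _ do rewrite dl_ne //.
  by rewrite !big1 ?mulr0 ?scaler0 ?subrr // => s _; rewrite mulr0 scaler0.
rewrite !dl_eq.
under eq_bigr => s _ do rewrite dl_eq if_pull.
under [X in _ = _ - _ *: X]eq_bigr => s _ do rewrite dl_eq if_pull.
rewrite (sum_pick K true n (- l2) (fun s : nat => G1 k j s *: (gpow gh ghi (2 * s%:Z) *
        (gpow gh ghi (gexp true l2) * u (lr true (l1 + 1) s))))).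
rewrite (sum_pick K true n (- (l2 + 1)) (fun s : nat => G1 k j s *: (gpow gh ghi (2 * s%:Z) *
        (gpow gh ghi (gexp true (l2 + 1)) * u (lr true l1 s))))).
rewrite gpow0 !mul1r /gexp /lr /pk.
have [d En] : exists d, n = d - l2 by exists (n + l2); lia.
case: d En => [[|m]|[|m]] En; dec.
- rewrite (_ : absz (n - - l2) = 0%N); last by lia.
  rewrite (_ : absz (n - - (l2 + 1)) = 1%N); last by lia.
  rewrite -?scalerAr !mulrA -!(gpowD h1 h2 hc).
  unifY u (- 2 * l2) (l1 + 1).
  by rewrite subr0 scalerA -scalerBl f1.
- rewrite (_ : absz (n - - l2) = m.+1); last by lia.
  rewrite (_ : absz (n - - (l2 + 1)) = m.+2); last by lia.
  rewrite -?scalerAr !mulrA -!(gpowD h1 h2 hc).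
  unifY u (2 * m.+1%:Z - 2 * l2) (l1 + 1 + m.+1%:Z).
  by rewrite scaler0 subrr scalerA -f2 subrr.
- rewrite (_ : absz (n - - (l2 + 1)) = 0%N); last by lia.
  rewrite -?scalerAr !mulrA -!(gpowD h1 h2 hc).
  unifY u (- 2 * l2 - 2) l1.
  by rewrite scaler0 !sub0r scalerA f0 scale1r.
- by rewrite ?mulr0 ?scaler0 ?subrr.
Qed.

Lemma kTF (G1 : 'I_N -> 'I_N -> nat -> Kq) (j k : 'I_N) al :
  phi_facts (G1 k j) al -> Kpart G1 true false j k al 4.
Proof.
move=> [f0 f1 f2] u i n l1 l2; exists (absz n + absz l2 + 3)%N => K HK.
case: (eqVneq i k) => [->|ik]; last first.
  rewrite !dl_ne //.
  under eq_bigr => s _ do rewrite dl_ne //.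
  under [X in _ = _ - _ *: X]eq_bigr => s _ do rewrite dl_ne //.
  by rewrite !big1 ?mulr0 ?scaler0 ?subrr // => s _; rewrite mulr0 scaler0.
rewrite !dl_eq.
under eq_bigr => s _ do rewrite dl_eq if_pull.
under [X in _ = _ - _ *: X]eq_bigr => s _ do rewrite dl_eq if_pull.
rewrite (sum_pick K true n (- l2) (fun s : nat => G1 k j s *: (gpow gh ghi (2 * s%:Z) *
        (gpow gh ghi (gexp false l2) * u (lr true (l1 + 1) s))))).
rewrite (sum_pick K true n (- (l2 + 1)) (fun s : nat => G1 k j s *: (gpow gh ghi (2 * s%:Z) *
        (gpow gh ghi (gexp false (l2 + 1)) * u (lr true l1 s))))).
rewrite /gexp /lr /pk.
have [d En] : exists d, n = d - l2 by exists (n + l2); lia.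
case: d En => [[|m]|[|m]] En; dec.
- rewrite (_ : absz (n - - l2) = 0%N); last by lia.
  rewrite (_ : absz (n - - (l2 + 1)) = 1%N); last by lia.
  rewrite -?scalerAr !mulrA -!(gpowD h1 h2 hc).
  unifY u (2 * l2 + 4) (l1 + 1).
  by rewrite subr0 scalerA -scalerBl f1.
- rewrite (_ : absz (n - - l2) = m.+1); last by lia.
  rewrite (_ : absz (n - - (l2 + 1)) = m.+2); last by lia.
  rewrite -?scalerAr !mulrA -!(gpowD h1 h2 hc).
  unifY u (2 * m.+1%:Z + 2 * l2 + 4) (l1 + 1 + m.+1%:Z).
  by rewrite !mulr0 scaler0 subrr scalerA -f2 subrr.
- rewrite (_ : absz (n - - (l2 + 1)) = 0%N); last by lia.
  rewrite -?scalerAr !mulrA -!(gpowD h1 h2 hc).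
  unifY u (2 * l2 + 2) l1.
  by rewrite !mulr0 scaler0 !sub0r scalerA f0 scale1r.
- by rewrite ?mulr0 ?scaler0 ?subrr.
Qed.

Lemma jFF (G2 : 'I_N -> 'I_N -> nat -> Kq) (j k : 'I_N) al :
  psi_facts (G2 j k) al -> Jpart G2 false false j k al 0.
Proof.
move=> [f0 f1 f2] v i n l1 l2; exists (absz n + absz l1 + 3)%N => K HK.
case: (eqVneq i j) => [->|ij]; last first.
  rewrite !dl_ne //.
  under eq_bigr => s _ do rewrite dl_ne //.
  under [X in _ - X = _]eq_bigr => s _ do rewrite dl_ne //.
  by rewrite !big1 ?mulr0 ?scaler0 ?subrr // => s _; rewrite mulr0 scaler0.
rewrite !dl_eq.
under eq_bigr => s _ do rewrite dl_eq if_pull.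
under [X in _ - X = _]eq_bigr => s _ do rewrite dl_eq if_pull.
rewrite (sum_pick K false n (- (l1 + 1)) (fun r : nat => G2 j k r *: (gpow gh ghi (2 * r%:Z) *
        (gpow gh ghi (gexp false (l1 + 1)) * v (lr false l2 r))))).
rewrite (sum_pick K false n (- l1) (fun r : nat => G2 j k r *: (gpow gh ghi (2 * r%:Z) *
        (gpow gh ghi (gexp false l1) * v (lr false (l2 + 1) r))))).
rewrite gpow0 !mul1r /gexp /lr /pk.
have [d En] : exists d, n = - l1 - d by exists (- l1 - n); lia.
case: d En => [[|[|m]]|m] En; dec.
- rewrite (_ : absz (- l1 - n) = 0%N); last by lia.
  rewrite -?scalerAr !mulrA -!(gpowD h1 h2 hc).
  unifY v (2 * l1) (l2 + 1).
  by rewrite scaler0 !sub0r f0.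
- rewrite (_ : absz (- l1 - n) = 1%N); last by lia.
  rewrite (_ : absz (- (l1 + 1) - n) = 0%N); last by lia.
  rewrite -?scalerAr !mulrA -!(gpowD h1 h2 hc).
  unifY v (2 * l1 + 2) l2.
  rewrite scaler0 subr0 scalerA -scalerBl.
  have -> : al * G2 j k 0%N - G2 j k 1%N = 1 by rewrite -opprB f1 opprK.
  by rewrite scale1r.
- rewrite (_ : absz (- l1 - n) = m.+2); last by lia.
  rewrite (_ : absz (- (l1 + 1) - n) = m.+1); last by lia.
  rewrite -?scalerAr !mulrA -!(gpowD h1 h2 hc).
  unifY v (2 * m.+2%:Z + 2 * l1) (l2 - m.+1%:Z).
  by rewrite scaler0 subrr scalerA -f2 subrr.
- by rewrite ?mulr0 ?scaler0 ?subrr.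
Qed.

Lemma jTT (G2 : 'I_N -> 'I_N -> nat -> Kq) (j k : 'I_N) al :
  phi_facts (G2 j k) al -> Jpart G2 true true j k al 0.
Proof.
move=> [f0 f1 f2] v i n l1 l2; exists (absz n + absz l1 + 3)%N => K HK.
case: (eqVneq i j) => [->|ij]; last first.
  rewrite !dl_ne //.
  under eq_bigr => s _ do rewrite dl_ne //.
  under [X in _ - X = _]eq_bigr => s _ do rewrite dl_ne //.
  by rewrite !big1 ?mulr0 ?scaler0 ?subrr // => s _; rewrite mulr0 scaler0.
rewrite !dl_eq.
under eq_bigr => s _ do rewrite dl_eq if_pull.
under [X in _ - X = _]eq_bigr => s _ do rewrite dl_eq if_pull.
rewrite (sum_pick K true n (- (l1 + 1)) (fun r : nat => G2 j k r *: (gpow gh ghi (2 * r%:Z) *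
        (gpow gh ghi (gexp true (l1 + 1)) * v (lr true l2 r))))).
rewrite (sum_pick K true n (- l1) (fun r : nat => G2 j k r *: (gpow gh ghi (2 * r%:Z) *
        (gpow gh ghi (gexp true l1) * v (lr true (l2 + 1) r))))).
rewrite gpow0 !mul1r /gexp /lr /pk.
have [d En] : exists d, n = d - l1 by exists (n + l1); lia.
case: d En => [[|m]|[|m]] En; dec.
- rewrite (_ : absz (n - - l1) = 0%N); last by lia.
  rewrite (_ : absz (n - - (l1 + 1)) = 1%N); last by lia.
  rewrite -?scalerAr !mulrA -!(gpowD h1 h2 hc).
  unifY v (- 2 * l1) (l2 + 1).
  rewrite scalerA -scalerBl sub0r -scaleNr.
  by have -> : al * G2 j k 1%N - G2 j k 0%N = - al by rewrite -opprB f1.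
- rewrite (_ : absz (n - - l1) = m.+1); last by lia.
  rewrite (_ : absz (n - - (l1 + 1)) = m.+2); last by lia.
  rewrite -?scalerAr !mulrA -!(gpowD h1 h2 hc).
  unifY v (2 * m.+1%:Z - 2 * l1) (l2 + 1 + m.+1%:Z).
  by rewrite scaler0 subrr scalerA -f2 subrr.
- rewrite (_ : absz (n - - (l1 + 1)) = 0%N); last by lia.
  rewrite -?scalerAr !mulrA -!(gpowD h1 h2 hc).
  unifY v (- 2 * l1 - 2) l2.
  by rewrite scaler0 !subr0 scalerA f0 scale1r.
- by rewrite ?mulr0 ?scaler0 ?subrr.
Qed.

Lemma jTF (G2 : 'I_N -> 'I_N -> nat -> Kq) (j k : 'I_N) al :
  psi_facts (G2 j k) al -> Jpart G2 true false j k al 4.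
Proof.
move=> [f0 f1 f2] v i n l1 l2; exists (absz n + absz l1 + 3)%N => K HK.
case: (eqVneq i j) => [->|ij]; last first.
  rewrite !dl_ne //.
  under eq_bigr => s _ do rewrite dl_ne //.
  under [X in _ - X = _]eq_bigr => s _ do rewrite dl_ne //.
  by rewrite !big1 ?mulr0 ?scaler0 ?subrr // => s _; rewrite mulr0 scaler0.
rewrite !dl_eq.
under eq_bigr => s _ do rewrite dl_eq if_pull.
under [X in _ - X = _]eq_bigr => s _ do rewrite dl_eq if_pull.
rewrite (sum_pick K false n (- (l1 + 1)) (fun r : nat => G2 j k r *: (gpow gh ghi (2 * r%:Z) *
        (gpow gh ghi (gexp true (l1 + 1)) * v (lr false l2 r))))).
rewrite (sum_pick K false n (- l1) (fun r : nat => G2 j k r *: (gpow gh ghi (2 * r%:Z) *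
        (gpow gh ghi (gexp true l1) * v (lr false (l2 + 1) r))))).
rewrite /gexp /lr /pk.
have [d En] : exists d, n = - l1 - d by exists (- l1 - n); lia.
case: d En => [[|[|m]]|m] En; dec.
- rewrite (_ : absz (- l1 - n) = 0%N); last by lia.
  rewrite -?scalerAr !mulrA -!(gpowD h1 h2 hc).
  unifY v (- 2 * l1) (l2 + 1).
  by rewrite !mulr0 scaler0 !sub0r f0.
- rewrite (_ : absz (- l1 - n) = 1%N); last by lia.
  rewrite (_ : absz (- (l1 + 1) - n) = 0%N); last by lia.
  rewrite -?scalerAr !mulrA -!(gpowD h1 h2 hc).
  unifY v (2 - 2 * l1) l2.
  rewrite scaler0 subr0 scalerA -scalerBl.
  have -> : al * G2 j k 0%N - G2 j k 1%N = 1 by rewrite -opprB f1 opprK.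
  by rewrite scale1r.
- rewrite (_ : absz (- l1 - n) = m.+2); last by lia.
  rewrite (_ : absz (- (l1 + 1) - n) = m.+1); last by lia.
  rewrite -?scalerAr !mulrA -!(gpowD h1 h2 hc).
  unifY v (2 * m.+2%:Z - 2 * l1) (l2 - m.+1%:Z).
  by rewrite !mulr0 scaler0 subrr scalerA -f2 subrr.
- by rewrite ?mulr0 ?scaler0 ?subrr.
Qed.

End Delta.


Lemma psi_gcoefF (F : fieldType) (a : F) : 
  [/\ gcoef a^-1 0%N = a, gcoef a^-1 1%N - a * gcoef a^-1 0%N = -1 &
      forall d, gcoef a^-1 d.+2 = a * gcoef a^-1 d.+1].
Proof.
rewrite /gcoef; split.
- by rewrite invrK.
- by rewrite !exprVn !invrK expr0 expr2 addrAC subrr sub0r.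
- by move=> d; rewrite !exprVn !invrK mulrBr -!exprS.
Qed.

Lemma phi_gcoefF (F : fieldType) (a : F) : a != 0 ->
  [/\ a * gcoef a 0%N = 1, gcoef a 0%N - a * gcoef a 1%N = a &
      forall d, gcoef a d.+1 = a * gcoef a d.+2].
Proof.
move=> a0; rewrite /gcoef; split.
- by rewrite mulfV.
- rewrite expr0 invr1 mulrBr mulr1 opprB addrA.
  have -> : a * a ^- 2 = a^-1 by rewrite exprS invfM mulrA mulfV // mul1r expr1.
  by rewrite addrAC subrr add0r.
- move=> d; rewrite mulrBr.
  have E k : a * a ^- k.+1 = a ^- k by rewrite exprS invfM mulrA mulfV // mul1r.
  by rewrite !E.
Qed.

Lemma psi_gcoef (a : Kq) : psi_facts (gcoef a^-1) a.
Proof. by have [? ? ?] := psi_gcoefF a; split. Qed.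

Lemma phi_gcoef (a : Kq) : a != 0 -> phi_facts (gcoef a) a.
Proof. by move=> a0; have [? ? ?] := phi_gcoefF a0; split. Qed.

Lemma qq_neq0 : qq != 0.
Proof. by rewrite /qq /qhalf expf_neq0 // tofrac_eq0 polyX_eq0. Qed.

Lemma qqB_neq0 (z : int) : qq ^ z != 0.
Proof. exact: expfz_neq0 qq_neq0. Qed.


(* Coefficientwise form (coefficient of u^{-l} v^{-n}, resp. u1^{-l1} u2^{-l2})
   of the five formal-series identities, each evaluated at an arbitrary P.
   gpow gh ghi (2*z) = gamma^z;  B j k = (alpha_j|alpha_k). *)
Theorem mainTheorem3 (N : nat) (B : 'I_N -> 'I_N -> int) (A : algType Kq)
    (gh ghi : A) (x : 'I_N -> int -> A) (Opsi Ophi : 'I_N -> int -> A -> A) :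
  fin_simple_form B ->
  Nq_minus B gh ghi x ->
  Omega_spec (psi_mono B gh ghi x) gh ghi x Opsi ->
  Omega_spec (phi_mono B gh ghi x) gh ghi x Ophi ->
  [/\ (* Omega_psi_m(u) x_i(v)
           = delta_{im} delta(v gamma/u) + g_{i,m,q^-1}(v gamma/u) x_i(v) Omega_psi_m(u) *)
      (forall (m i : 'I_N) (l n : int) (P : A),
         fin_sum_to
           (fun r : nat => g_ij_qinv B i m r *:
              (gpow gh ghi (2 * r%:Z) * (x i (n + r%:Z) * Opsi m (l - r%:Z) P)))
           (Opsi m l (x i n * P)
            - (if (i == m) && (n == - l) then gpow gh ghi (2 * l) * P else 0))),
      (* Omega_phi_m(u) x_i(v)
           = delta_{im} delta(u gamma/v) + g_{i,m}(u gamma/v) x_i(v) Omega_phi_m(u) *)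
      (forall (m i : 'I_N) (l n : int) (P : A),
         fin_sum_to
           (fun r : nat => g_ij B i m r *:
              (gpow gh ghi (2 * r%:Z) * (x i (n - r%:Z) * Ophi m (l + r%:Z) P)))
           (Ophi m l (x i n * P)
            - (if (i == m) && (n == - l) then gpow gh ghi (- (2 * l)) * P else 0))),
      (* (q^a u1 - u2) Opsi_j(u1) Opsi_k(u2) = (u1 - q^a u2) Opsi_k(u2) Opsi_j(u1) *)
      (forall (j k : 'I_N) (l1 l2 : int) (P : A),
         qq ^ B j k *: Opsi j (l1 + 1) (Opsi k l2 P) - Opsi j l1 (Opsi k (l2 + 1) P)
         = Opsi k l2 (Opsi j (l1 + 1) P) - qq ^ B j k *: Opsi k (l2 + 1) (Opsi j l1 P)),
      (* (q^a u1 - u2) Ophi_j(u1) Ophi_k(u2) = (u1 - q^a u2) Ophi_k(u2) Ophi_j(u1) *)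
      (forall (j k : 'I_N) (l1 l2 : int) (P : A),
         qq ^ B j k *: Ophi j (l1 + 1) (Ophi k l2 P) - Ophi j l1 (Ophi k (l2 + 1) P)
         = Ophi k l2 (Ophi j (l1 + 1) P) - qq ^ B j k *: Ophi k (l2 + 1) (Ophi j l1 P)) &
      (* (q^a gamma^2 u1 - u2) Ophi_j(u1) Opsi_k(u2)
           = (gamma^2 u1 - q^a u2) Opsi_k(u2) Ophi_j(u1) *)
      (forall (j k : 'I_N) (l1 l2 : int) (P : A),
         qq ^ B j k *: (gpow gh ghi 4 * Ophi j (l1 + 1) (Opsi k l2 P))
           - Ophi j l1 (Opsi k (l2 + 1) P)
         = gpow gh ghi 4 * Opsi k l2 (Ophi j (l1 + 1) P)
           - qq ^ B j k *: Opsi k (l2 + 1) (Ophi j l1 P))].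
Proof.
move=> [_ Bsym _ _ _] [h1 h2 hc _ Hspan] HOpsi HOphi.
rewrite psi_gen in HOpsi; rewrite phi_gen in HOphi.
have GsymQ : forall i j r, g_ij_qinv B i j r = g_ij_qinv B j i r.
  by move=> i j r; rewrite /g_ij_qinv Bsym.
have Gsym : forall i j r, g_ij B i j r = g_ij B j i r.
  by move=> i j r; rewrite /g_ij Bsym.
have psiF : forall j k, psi_facts (g_ij_qinv B k j) (qq ^ B j k).
  by move=> j k; rewrite /g_ij_qinv -expfV Bsym; apply: psi_gcoef.
have psiF' : forall j k, psi_facts (g_ij_qinv B j k) (qq ^ B j k).
  by move=> j k; rewrite /g_ij_qinv -expfV; apply: psi_gcoef.
have phiF : forall j k, phi_facts (g_ij B k j) (qq ^ B j k).
  by move=> j k; rewrite /g_ij Bsym; apply: phi_gcoef; apply: qqB_neq0.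
have phiF' : forall j k, phi_facts (g_ij B j k) (qq ^ B j k).
  by move=> j k; rewrite /g_ij; apply: phi_gcoef; apply: qqB_neq0.
split.
- by move=> m i l n P; exact: (fin_from_ev (Exp h1 h2 hc Hspan GsymQ HOpsi m i l n P)).
- by move=> m i l n P; exact: (fin_from_ev (Exp h1 h2 hc Hspan Gsym HOphi m i l n P)).
- move=> j k l1 l2 P.
  have := comm h1 h2 hc Hspan GsymQ GsymQ HOpsi HOpsi
    (kFF h1 h2 hc (psiF j k)) (jFF h1 h2 hc (psiF' j k)) P l1 l2.
  by rewrite /Lh /Rh gpow0 !mul1r.
- move=> j k l1 l2 P.
  have := comm h1 h2 hc Hspan Gsym Gsym HOphi HOphi
    (kTT h1 h2 hc (phiF j k)) (jTT h1 h2 hc (phiF' j k)) P l1 l2.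
  by rewrite /Lh /Rh gpow0 !mul1r.
- move=> j k l1 l2 P.
  have := comm h1 h2 hc Hspan Gsym GsymQ HOphi HOpsi
    (kTF h1 h2 hc (phiF j k)) (jTF h1 h2 hc (psiF' j k)) P l1 l2.
  by rewrite /Lh /Rh.
Qed.
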